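(* Let $G=(V,E)$ be a simple undirected graph on $n$ nodes, let $0<\epsilon<\frac13$, $\delta>0$, $p\in(0,1)$, and let $D\subseteq V$ be an $\epsilon^3$-near clique with $|D|\ge\delta n$; let $C=K_{\epsilon^2}(D)\cap D$. Let $S=S^{(1)}\cup S^{(2)}$ be the random set where each node independently belongs to $S^{(1)}$ with probability $p_1=p/2$ and, independently, to $S^{(2)}$ with probability $p_2=\frac{p-p_1}{1-p_1}$ (so each node is in $S$ independently with probability $p$), and let $X^*=S^{(1)}\cap C$. Then $X^*$ is contained in a single connected component of $G[S]$ with probability at least $1-e^{-\Omega(\delta pn)}$.
   Context: $\Gamma(v)$ denotes the set of neighbors of $v$; $G[S]$ is the subgraph induced by $S$. For $Y\subseteq V$ and $0\le\eta\le1$: $K_\eta(Y)=\{v\in V: |\Gamma(v)\cap Y|\ge(1-\eta)|Y|\}$. Each undirected edge is counted as two directed edges; a set $D\subseteq V$ is a $\gamma$-near clique if $|\{(u,v)\in D\times D:\{u,v\}\in E\}|\ge(1-\gamma)|D|(|D|-1)$. $\Omega(\cdot)$ hides an absolute positive constant. *)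

(* Defs.v *)
From HB Require Import structures.
From mathcomp Require Import all_boot all_order all_algebra.
From mathcomp Require Import reals.
From mathcomp.analysis Require Import sequences exp.
Set Implicit Arguments.
Unset Strict Implicit.
Unset Printing Implicit Defensive.
Import Order.TTheory GRing.Theory Num.Theory.
Local Open Scope ring_scope.

Section Defs.
Variable R : realType.
Variable T : finType.
Variable e : rel T.

Definition nbhd (v : T) : {set T} := [set u | e v u].

Definition Kset (eta : R) (Y : {set T}) : {set T} :=
  [set v | (1 - eta) * #|Y|%:R <= #|nbhd v :&: Y|%:R].

Definition near_clique (gamma : R) (D : {set T}) : Prop :=
  (1 - gamma) * #|D|%:R * (#|D|%:R - 1) <=
  #|[set uv : T * T | [&& uv.1 \in D, uv.2 \in D & e uv.1 uv.2]]|%:R.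

Definition induced_rel (S : {set T}) : rel T :=
  [rel u v | [&& u \in S, v \in S & e u v]].

Definition in_one_component (S X : {set T}) : bool :=
  (X \subset S) &&
  [forall x in X, forall y in X, connect (induced_rel S) x y].

Definition set_weight (q : R) (S : {set T}) : R :=
  \prod_(v : T) (if v \in S then q else 1 - q).

(* probability of an event on (S1, S2), where S1 and S2 are independent,
   S1 contains each node independently with prob. q1, S2 with prob. q2 *)
Definition prob2 (q1 q2 : R) (P : {set T} -> {set T} -> bool) : R :=
  \sum_(S1 : {set T}) \sum_(S2 : {set T})
     set_weight q1 S1 * set_weight q2 S2 * (P S1 S2)%:R.
End Defs.

(* Main.v *)
Require Import Defs.
From HB Require Import structures.
From mathcomp Require Import all_boot all_order all_algebra.
From mathcomp Require Import reals.
From mathcomp.analysis Require Import sequences exp.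
From mathcomp Require Import ring lra zify.
Import Order.TTheory GRing.Theory Num.Theory.
Set Implicit Arguments.
Unset Strict Implicit.
Local Open Scope ring_scope.


Definition E2 (R : realType) (T : finType) (q1 q2 : R)
  (F : {set T} -> {set T} -> R) : R :=
  \sum_(S1 : {set T}) \sum_(S2 : {set T})
     set_weight q1 S1 * set_weight q2 S2 * F S1 S2.

Lemma sum2_prod (R : realType) (T : finType) (K : T -> bool -> bool -> R) :
  \sum_(S1 : {set T}) \sum_(S2 : {set T}) \prod_v K v (v \in S1) (v \in S2) =
  \prod_v (K v true true + K v true false + K v false true + K v false false).
Proof.
rewrite (eq_bigr (fun v => (K v true true + K v true false) +
   (K v false true + K v false false))); last by move=> v _; rewrite !addrA.
rewrite bigA_distr; apply: eq_bigr => S1 _.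
rewrite (eq_bigr (fun v => K v (v \in S1) true + K v (v \in S1) false));
  last by move=> v _; case: (v \in S1).
rewrite bigA_distr; apply: eq_bigr => S2 _.
by apply: eq_bigr => v _; case: (v \in S2).
Qed.

Lemma E2_prod (R : realType) (T : finType) (q1 q2 : R) (H : T -> bool -> bool -> R) :
  E2 q1 q2 (fun S1 S2 => \prod_v H v (v \in S1) (v \in S2)) =
  \prod_v (q1 * q2 * H v true true + q1 * (1 - q2) * H v true false
          + (1 - q1) * q2 * H v false true + (1 - q1) * (1 - q2) * H v false false).
Proof.
pose K := fun v (b1 b2 : bool) => (if b1 then q1 else 1 - q1) *
   (if b2 then q2 else 1 - q2) * H v b1 b2.
rewrite /E2; transitivity (\sum_(S1 : {set T}) \sum_(S2 : {set T})
   \prod_v K v (v \in S1) (v \in S2)).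
  apply: eq_bigr => S1 _; apply: eq_bigr => S2 _.
  rewrite /set_weight -!big_split /=; apply: eq_bigr => v _.
  by rewrite /K; case: (v \in S1); case: (v \in S2).
rewrite sum2_prod; apply: eq_bigr => v _; by rewrite /K.
Qed.

Lemma E2_ext (R : realType) (T : finType) (q1 q2 : R) (F G : {set T} -> {set T} -> R) :
  (forall S1 S2, F S1 S2 = G S1 S2) -> E2 q1 q2 F = E2 q1 q2 G.
Proof.
move=> h; apply: eq_bigr => S1 _; apply: eq_bigr => S2 _; by rewrite h.
Qed.

Lemma weight_ge0 (R : realType) (T : finType) (q : R) (S : {set T}) :
  0 <= q <= 1 -> 0 <= set_weight q S.
Proof.
move=> /andP[h0 h1]; apply: prodr_ge0 => v _; case: (v \in S) => //.
by rewrite subr_ge0.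
Qed.

Lemma E2_le (R : realType) (T : finType) (q1 q2 : R) (F G : {set T} -> {set T} -> R) :
  0 <= q1 <= 1 -> 0 <= q2 <= 1 ->
  (forall S1 S2, F S1 S2 <= G S1 S2) -> E2 q1 q2 F <= E2 q1 q2 G.
Proof.
move=> hq1 hq2 h; apply: ler_sum => S1 _; apply: ler_sum => S2 _.
apply: ler_wpM2l => //; apply: mulr_ge0; exact: weight_ge0.
Qed.

Lemma E2_1 (R : realType) (T : finType) (q1 q2 : R) :
  E2 q1 q2 (fun (_ _ : {set T}) => 1) = 1.
Proof.
have -> : E2 q1 q2 (fun (_ _ : {set T}) => 1) = E2 q1 q2 (fun S1 S2 =>
   \prod_(v : T) (fun _ _ _ => (1:R)) v (v \in S1) (v \in S2)).
  by apply: E2_ext => S1 S2; rewrite big1.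
rewrite (E2_prod q1 q2 (fun _ _ _ => 1)) big1 // => v _; rewrite !mulr1; lra.
Qed.

Lemma E2_lin (R : realType) (T : finType) (q1 q2 : R) (A : {set T})
   (F : T -> {set T} -> {set T} -> R) :
  E2 q1 q2 (fun S1 S2 => 1 - \sum_(x in A) F x S1 S2) =
  1 - \sum_(x in A) E2 q1 q2 (F x).
Proof.
rewrite /E2.
transitivity (\sum_(S1 : {set T}) \sum_(S2 : {set T}) set_weight q1 S1 * set_weight q2 S2
   - \sum_(S1 : {set T}) \sum_(S2 : {set T}) \sum_(x in A)
        set_weight q1 S1 * set_weight q2 S2 * F x S1 S2).
  rewrite -sumrB; apply: eq_bigr => S1 _; rewrite -sumrB; apply: eq_bigr => S2 _.
  by rewrite mulrBr mulr1 mulr_sumr.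
congr (_ - _).
  rewrite -[RHS](@E2_1 _ T q1 q2) /E2; apply: eq_bigr => S1 _; apply: eq_bigr => S2 _.
  by rewrite mulr1.
rewrite [RHS]exchange_big; apply: eq_bigr => S1 _.
by rewrite [RHS]exchange_big.
Qed.

Lemma sum_if_const (R : realType) (T : finType) (A : {set T}) (k : R) :
  \sum_v (if v \in A then k else 0) = k * #|A|%:R.
Proof. by rewrite -big_mkcond /= sumr_const mulr_natr. Qed.

Lemma prod_if_const (R : realType) (T : finType) (A : {set T}) (k : R) :
  \prod_v (if v \in A then k else 1) = k ^+ #|A|.
Proof. by rewrite -big_mkcond /= prodr_const. Qed.


Definition Zs (T : finType) (S1 S2 D : {set T}) := (S1 :|: S2) :&: D.
Definition bad (T : finType) (e : rel T) (D : {set T}) (x : T) (S1 S2 : {set T}) : bool :=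
  (x \in S1) && (#|Zs S1 S2 D :&: nbhd e x| <= #|Zs S1 S2 D :\: nbhd e x|)%N.

Lemma comb (T : finType) (e : rel T) (esym : symmetric e) (D C S1 S2 : {set T}) :
  (forall x, x \in C -> ~~ bad e D x S1 S2) ->
  in_one_component e (S1 :|: S2) (S1 :&: C).
Proof.
move=> hC; apply/andP; split.
  by apply/subsetP => v; rewrite !inE => /andP[-> _].
apply/forallP => x; apply/implyP; rewrite inE => /andP[xS1 xC].
apply/forallP => y; apply/implyP; rewrite inE => /andP[yS1 yC].
have := hC x xC; have := hC y yC; rewrite /bad xS1 yS1 /= -!ltnNge => hy hx.
set Z := Zs S1 S2 D in hx hy.
have cx := cardsID (nbhd e x) Z; have cy := cardsID (nbhd e y) Z.
have cu := cardsU (Z :&: nbhd e x) (Z :&: nbhd e y).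
have sub : (Z :&: nbhd e x) :|: (Z :&: nbhd e y) \subset Z.
  by rewrite -setIUr subsetIl.
have le := subset_leq_card sub.
case: (set_0Vmem ((Z :&: nbhd e x) :&: (Z :&: nbhd e y))) => [h0 | [w hw]].
  rewrite h0 cards0 in cu; lia.
move: hw; rewrite !inE => /andP[/andP[/andP[wS wD] exw] /andP[_ eyw]].
have xS : x \in S1 :|: S2 by rewrite inE xS1.
have yS : y \in S1 :|: S2 by rewrite inE yS1.
have wS' : w \in S1 :|: S2 by rewrite inE.
apply: (connect_trans (y := w)); apply: connect1; rewrite /induced_rel /=.
  by rewrite xS wS' exw.
by rewrite wS' yS esym.
Qed.

Definition Hb (R : realType) (T : finType) (e : rel T) (D : {set T}) (x v : T)
  (b1 b2 : bool) : R :=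
  if v == x then (if b1 then 2 else 0)
  else if v \in D then (if b1 || b2 then (if v \in nbhd e x then 2^-1 else 2) else 1)
  else 1.

Lemma Hb_ge0 (R : realType) (T : finType) (e : rel T) D x v b1 b2 :
  0 <= Hb R e D x v b1 b2.
Proof.
rewrite /Hb; case: (v == x); case: b1; case: b2; case: (v \in D);
  case: (v \in nbhd e x) => //=; lra.
Qed.

Lemma bad_ind (R : realType) (T : finType) (e : rel T) (eirr : irreflexive e)
   (D : {set T}) x S1 S2 : x \in D ->
  ((bad e D x S1 S2)%:R : R) <= \prod_v Hb R e D x v (v \in S1) (v \in S2).
Proof.
move=> xD.
have P0 : 0 <= \prod_v Hb R e D x v (v \in S1) (v \in S2).
  by apply: prodr_ge0 => v _; apply: Hb_ge0.
case hb: (bad e D x S1 S2); last by [].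
move: hb; rewrite /bad => /andP[xS1 hle].
set Z := Zs S1 S2 D in hle.
rewrite (eq_bigr (fun v => (if v \in Z :\: nbhd e x then 2 else 1) *
    (if v \in Z :&: nbhd e x then 2^-1 else 1))); last first.
  move=> v _; rewrite /Hb /Z /Zs !inE.
  case: eqP => [->|_].
    by rewrite xS1 xD eirr /= mulr1.
  by case: (v \in S1); case: (v \in S2); case: (v \in D); case: (e x v);
    rewrite /= ?mulr1 ?mul1r.
rewrite big_split /= !prod_if_const exprVn.
rewrite ler_pdivlMr ?exprn_gt0 // mul1r.
by rewrite ler_eXn2l // ltr1n.
Qed.

Lemma bad_prob (R : realType) (T : finType) (e : rel T) (eirr : irreflexive e)
   (D : {set T}) x (p q1 q2 : R) : x \in D ->
  0 < p -> p < 1 -> q1 = p / 2 -> 0 <= q2 <= 1 -> (1 - q1) * (1 - q2) = 1 - p ->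
  (1 - 9^-1 : R) * #|D|%:R <= #|nbhd e x :&: D|%:R ->
  E2 q1 q2 (fun S1 S2 => ((bad e D x S1 S2)%:R : R)) <=
  p * expR (- (p * #|D|%:R / 3)).
Proof.
move=> xD p0 p1 hq1 /andP[q20 q21] hw hK.
have q1r : 0 <= q1 <= 1 by apply/andP; split; lra.
apply: le_trans.
  apply: (E2_le (G := fun S1 S2 => \prod_v Hb R e D x v (v \in S1) (v \in S2))) => //.
    by apply/andP.
  by move=> S1 S2; apply: bad_ind.
rewrite E2_prod.
pose a v : R := if v \in D then (if v \in nbhd e x then -(p/2) else p) else 0.
have w11 : 0 <= q1 * q2 by apply: mulr_ge0; lra.
have w10 : 0 <= q1 * (1 - q2) by apply: mulr_ge0; lra.
have w01 : 0 <= (1 - q1) * q2 by apply: mulr_ge0; lra.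
have w00 : 0 <= (1 - q1) * (1 - q2) by apply: mulr_ge0; lra.
have ea := expR_ge1Dx (- (p/2)); have eb := expR_ge1Dx p.
apply: (@le_trans _ _ (\prod_v (if v == x then p else expR (a v)))).
  apply: ler_prod => v _; rewrite /Hb /a.
  case: eqP => [_|_] /=.
    apply/andP; split; lra.
  case: (v \in D); case: (v \in nbhd e x) => /=; rewrite ?expR0;
    apply/andP; split; lra.
rewrite (bigD1 x) //= eqxx.
rewrite (eq_bigr (fun v => expR (a v))); last by move=> v /negbTE ->.
apply: ler_wpM2l; first lra.
apply: (@le_trans _ _ (\prod_v expR (a v))).
  rewrite [X in _ <= X](bigD1 x) //=.
  apply: ler_peMl; first by apply: prodr_ge0 => v _; apply: expR_ge0.
  rewrite /a xD inE eirr; lra.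
rewrite -expR_sum ler_expR.
rewrite (eq_bigr (fun v => (if v \in D then p else 0) -
   (if v \in nbhd e x :&: D then 3 * p / 2 else 0))); last first.
  move=> v _; rewrite /a !inE; case: (v \in D); case: (e x v) => /=; lra.
rewrite big_split /= sumrN !sum_if_const.
nra.
Qed.


Lemma expRN_le (R : realType) (p : R) : 0 <= p <= 1 -> expR (- p) <= 1 - p / 2.
Proof.
move=> /andP[p0 p1].
rewrite expRN -div1r ler_pdivrMr ?expR_gt0 //.
have := expR_ge1Dx p; nra.
Qed.

Lemma empty_prob (R : realType) (T : finType) (e : rel T) (D C : {set T})
   (p q1 q2 : R) : C \subset D ->
  0 < p -> p < 1 -> q1 = p / 2 -> 0 <= q2 <= 1 ->
  expR (- (p * #|D|%:R)) <=
  prob2 q1 q2 (fun S1 S2 => in_one_component e (S1 :|: S2) (S1 :&: C)).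
Proof.
move=> CD p0 p1 hq1 /andP[q20 q21].
have q1r : 0 <= q1 <= 1 by apply/andP; split; lra.
pose Gb (v : T) (b1 b2 : bool) : R := if v \in D then (if b1 then 0 else 1) else 1.
have Gb01 : forall v b1 b2, 0 <= Gb v b1 b2 <= 1.
  by move=> v b1 b2; rewrite /Gb; case: (v \in D); case: b1; rewrite ?lexx ?ler01.
apply: (@le_trans _ _ (E2 q1 q2 (fun S1 S2 => \prod_v Gb v (v \in S1) (v \in S2)))); last first.
  apply: E2_le => //; first by apply/andP.
  move=> S1 S2.
  case: (set_0Vmem (S1 :&: D)) => [h0 | [w]].
    have -> : S1 :&: C = set0.
      apply/eqP; rewrite -subset0 -h0; exact: setIS.
    have -> : in_one_component e (S1 :|: S2) set0.
      apply/andP; split; first exact: sub0set.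
      by apply/forallP => x; rewrite inE.
    apply: (@le_trans _ _ (\prod_(v : T) (1:R))).
      by apply: ler_prod => v _; apply: Gb01.
    by rewrite big1.
  rewrite inE => /andP[wS1 wD].
  rewrite (bigD1 w) //= {1}/Gb wD wS1 mul0r.
  by case: (in_one_component _ _ _).
rewrite E2_prod.
have w11 : 0 <= q1 * q2 by apply: mulr_ge0; lra.
have w10 : 0 <= q1 * (1 - q2) by apply: mulr_ge0; lra.
have w01 : 0 <= (1 - q1) * q2 by apply: mulr_ge0; lra.
have w00 : 0 <= (1 - q1) * (1 - q2) by apply: mulr_ge0; lra.
have ee : expR (- p) <= 1 - p / 2 by apply: expRN_le; apply/andP; split; lra.
apply: (@le_trans _ _ (\prod_v expR (if v \in D then - p else 0))).
  rewrite -expR_sum ler_expR sum_if_const; lra.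
apply: ler_prod => v _; rewrite /Gb; case: (v \in D) => /=.
  apply/andP; split; [exact: expR_ge0 | lra].
apply/andP; split; rewrite ?expR0; lra.
Qed.

Lemma union_prob (R : realType) (T : finType) (e : rel T) (esym : symmetric e)
   (eirr : irreflexive e) (D : {set T}) (eps p q1 q2 : R) :
  0 < eps -> eps < 3^-1 ->
  0 < p -> p < 1 -> q1 = p / 2 -> 0 <= q2 <= 1 -> (1 - q1) * (1 - q2) = 1 - p ->
  1 - #|D|%:R * p * expR (- (p * #|D|%:R / 3)) <=
  prob2 q1 q2 (fun S1 S2 => in_one_component e (S1 :|: S2)
                  (S1 :&: (Kset e (eps ^+ 2) D :&: D))).
Proof.
move=> e0 e1 p0 p1 hq1 hq2 hw.
set C := Kset e (eps ^+ 2) D :&: D.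
have q1r : 0 <= q1 <= 1 by apply/andP; split; lra.
have CD : C \subset D by apply: subsetIr.
change (1 - #|D|%:R * p * expR (- (p * #|D|%:R / 3)) <=
  E2 q1 q2 (fun S1 S2 => ((in_one_component e (S1 :|: S2) (S1 :&: C))%:R : R))).
apply: (@le_trans _ _ (E2 q1 q2 (fun S1 S2 =>
            1 - \sum_(x in C) ((bad e D x S1 S2)%:R : R)))); last first.
  apply: E2_le => // S1 S2.
  have sg0 : 0 <= \sum_(x in C) ((bad e D x S1 S2)%:R : R) by apply: sumr_ge0.
  case: (boolP [exists x in C, bad e D x S1 S2]).
    move/existsP=> [x /andP[xC hb]].
    rewrite (bigD1 x) //= hb.
    have : 0 <= \sum_(i in C | i != x) ((bad e D i S1 S2)%:R : R) by apply: sumr_ge0.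
    have : (0:R) <= (in_one_component e (S1 :|: S2) (S1 :&: C))%:R by [].
    have -> : (true%:R : R) = 1 by []. lra.
  move=> hn.
  have hC : forall x, x \in C -> ~~ bad e D x S1 S2.
    move=> x xC; apply/negP => hb; move/negP: hn; apply; apply/existsP; exists x.
    by rewrite xC hb.
  rewrite (comb esym hC); have -> : (true%:R : R) = 1 by []. lra.
rewrite E2_lin.
have hsum : \sum_(x in C) E2 q1 q2 (fun S1 S2 => ((bad e D x S1 S2)%:R : R)) <=
   \sum_(x in C) (p * expR (- (p * #|D|%:R / 3))).
  apply: ler_sum => x xC.
  have xD : x \in D by move: xC; rewrite inE => /andP[].
  apply: (bad_prob eirr xD) => //.
  move: xC; rewrite !inE => /andP[hK _].
  have eps2 : eps ^+ 2 <= 9^-1 by rewrite expr2; nra.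
  have m0 : (0:R) <= #|D|%:R by [].
  apply: le_trans hK; apply: ler_wpM2r => //; lra.
rewrite sumr_const in hsum.
have cC : (#|C| <= #|D|)%N by apply: subset_leq_card.
have cC' : (#|C|%:R : R) <= #|D|%:R by rewrite ler_nat.
have eg := expR_ge0 (- (p * #|D|%:R / 3)).
rewrite -(mulr_natr _ #|C|) in hsum.
have : p * expR (- (p * #|D|%:R / 3)) * #|C|%:R <= p * expR (- (p * #|D|%:R / 3)) * #|D|%:R.
  apply: ler_wpM2l => //; apply: mulr_ge0 => //; lra.
move=> h2.
have -> : #|D|%:R * p * expR (- (p * #|D|%:R / 3)) =
          p * expR (- (p * #|D|%:R / 3)) * #|D|%:R by rewrite -mulrA mulrC.
lra.
Qed.

Unset Implicit Arguments.
Set Strict Implicit.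


Theorem lemma5p5 (R : realType) :
  exists c : R, 0 < c /\
  forall (T : finType) (e : rel T), symmetric e -> irreflexive e ->
  forall (eps delta p : R), 0 < eps -> eps < 3^-1 -> 0 < delta ->
  0 < p -> p < 1 ->
  forall D : {set T},
    near_clique e (eps ^+ 3) D ->
    delta * #|T|%:R <= #|D|%:R ->
    let C := Kset e (eps ^+ 2) D :&: D in
    let p1 := p / 2 in
    let p2 := (p - p1) / (1 - p1) in
    1 - expR (- (c * delta * p * #|T|%:R)) <=
    prob2 p1 p2 (fun S1 S2 => in_one_component e (S1 :|: S2) (S1 :&: C)).
Proof.
have E64 := expR_gt0 (- 64 : R).
have E64le : expR (- 64 : R) <= 1 by rewrite expR_le1; lra.
exists (expR (- 64) / 64); split; first by apply: divr_gt0.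
move=> T e esym eirr eps delta p e0 e1 d0 p0 p1 D _ hD; cbv zeta.
set C := Kset e (eps ^+ 2) D :&: D.
set q1 := p / 2.
set q2 := (p - q1) / (1 - q1).
set c := expR (- 64) / 64.
have c0 : 0 < c by apply: divr_gt0.
have c64 : c * 64 = expR (- 64) by rewrite /c; field.
have hq1 : q1 = p / 2 by [].
have hq2a : q2 = (p / 2) / (1 - p / 2) by rewrite /q2 /q1; congr (_ / _); lra.
have hq2 : 0 <= q2 <= 1.
  rewrite hq2a; apply/andP; split.
    by apply: divr_ge0; lra.
  by rewrite ler_pdivrMr; lra.
have hw : (1 - q1) * (1 - q2) = 1 - p.
  rewrite hq2a /q1; field; lra.
set m : R := #|D|%:R.
have m0 : 0 <= m by [].
set t := p * m.
have t0 : 0 <= t by apply: mulr_ge0; lra.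
set y := c * delta * p * #|T|%:R.
have hy : y <= c * t.
  rewrite /y /t.
  have cp : 0 <= c * p by apply: mulr_ge0; lra.
  have := ler_wpM2l cp hD.
  have -> : c * delta * p * #|T|%:R = c * p * (delta * #|T|%:R) by ring.
  have -> : c * (p * m) = c * p * #|D|%:R by rewrite /m; ring.
  by [].
have ey := expR_ge1Dx (- y).
case: (lerP t 64) => ht.
  apply: (@le_trans _ _ (expR (- t))); last first.
    exact: (empty_prob e (C := C) (q1 := q1) (q2 := q2) (subsetIr _ _) p0 p1 hq1 hq2).
  have : expR (- 64) <= expR (- t) by rewrite ler_expR; lra.
  have : c * t <= c * 64 by apply: ler_wpM2l; lra.
  lra.
apply: le_trans; last first.
  exact: (union_prob esym eirr D e0 e1 p0 p1 hq1 hq2 hw).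
rewrite -/m.
have -> : m * p * expR (- (p * m / 3)) = t * expR (- (t / 3)) by rewrite /t; ring.
have c1 : c <= 64^-1 by rewrite /c ler_pdivrMr; lra.
have h1 : expR (- (t / 12)) <= expR (- y).
  rewrite ler_expR.
  have : c * t <= 64^-1 * t by apply: ler_wpM2r.
  lra.
have h2 : expR (- (t / 12)) = expR (t / 4) * expR (- (t / 3)).
  rewrite -expRD; congr expR; lra.
have h3 : expR (t / 4) = expR (t / 8) * expR (t / 8).
  rewrite -expRD; congr expR; lra.
have h4 := expR_ge1Dx (t / 8).
have h5 : t <= expR (t / 4) by rewrite h3; nra.
have h6 : t * expR (- (t / 3)) <= expR (t / 4) * expR (- (t / 3)).
  by apply: ler_wpM2r => //; apply: expR_ge0.
lra.
Qed.
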